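(* Let $(L,\le,(\sqsubseteq_\alpha)_{\alpha<\kappa})$ be a model of Axioms 1–4 with $\kappa$ a limit ordinal. Let $\alpha<\kappa$, $x\in L$, $X\subseteq(x]_\alpha$, and let $y=\bigsqcup_\alpha X$. Then $y$ is the $\le$-least element of $[y]_\alpha$, and $y\sqsubseteq_{\alpha+1}z$ for all $z\in[y]_\alpha$.
   Context: Setting (model of Axioms 1–4). Let $(L,\le)$ be a complete lattice with join operation $\bigvee$ and least element $\perp$. Let $\kappa>0$ be an ordinal, and for each ordinal $\alpha<\kappa$ let $\sqsubseteq_\alpha$ be a preorder on $L$. Derived relations: - $x=_\alpha y$ means $x\sqsubseteq_\alpha y$ and $y\sqsubseteq_\alpha x$. - $x\sqsubset_\alpha y$ means $x\sqsubseteq_\alpha y$ and not $x=_\alpha y$. Derived sets, for $x\in L$ and $\alpha<\kappa$: - $(x]_\alpha=\{y\in L:\forall\beta<\alpha,\ x=_\beta y\}$. - $[x]_\alpha=\{y\in L: x=_\alpha y\}$. For a set $X$, $X\sqsubseteq_\alpha y$ means $x\sqsubseteq_\alpha y$ for all $x\in X$. The structure is a model of Axioms 1–4 if: - (A1) for all $\alpha<\beta<\kappa$, $x\sqsubseteq_\beta y$ implies $x=_\alpha y$; - (A2) $\bigcap_{\alpha<\kappa}=_\alpha$ is the identity relation on $L$; - (A3) for every $x\in L$, every $\alpha<\kappa$ and every $X\subseteq(x]_\alpha$ there is $y\in(x]_\alpha$ with $X\sqsubseteq_\alpha y$ such that for all $z\in(x]_\alpha$ with $X\sqsubseteq_\alpha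 z$ we have $y\sqsubseteq_\alpha z$ and $y\le z$; - (A4) for every nonempty $X\subseteq L$, every $\alpha<\kappa$ and every $y\in L$, if $y=_\alpha x$ for all $x\in X$ then $y=_\alpha\bigvee X$. The element $y$ of (A3) is unique and is denoted $\bigsqcup_\alpha X$ (relative to $(x]_\alpha$). *)

(* Defs.v *)
From Stdlib Require Import Classical.

(* Ordinals below kappa are represented by a type I with a strict
   well-order lt (its order type is kappa). *)
Definition well_order {I : Type} (lt : I -> I -> Prop) : Prop :=
  (forall a, ~ lt a a) /\
  (forall a b c, lt a b -> lt b c -> lt a c) /\
  (forall a b, lt a b \/ a = b \/ lt b a) /\
  well_founded lt.

(* kappa is a limit ordinal: nonzero (I inhabited) and no maximum. *)
Definition limit_type {I : Type} (lt : I -> I -> Prop) : Prop :=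
  inhabited I /\ forall a, exists b, lt a b.

Definition is_succ {I : Type} (lt : I -> I -> Prop) (a s : I) : Prop :=
  lt a s /\ forall c, lt a c -> ~ lt c s.

Definition complete_lattice {L : Type} (le : L -> L -> Prop)
  (sup : (L -> Prop) -> L) : Prop :=
  (forall x, le x x) /\
  (forall x y z, le x y -> le y z -> le x z) /\
  (forall x y, le x y -> le y x -> x = y) /\
  (forall X : L -> Prop,
     (forall u, X u -> le u (sup X)) /\
     (forall z, (forall u, X u -> le u z) -> le (sup X) z)).

Definition preorder {L : Type} (r : L -> L -> Prop) : Prop :=
  (forall x, r x x) /\ (forall x y z, r x y -> r y z -> r x z).

Section Derived.
Context {I L : Type} (lt : I -> I -> Prop) (pre : I -> L -> L -> Prop).

Definition eqa (a : I) (x y : L) : Prop := pre a x y /\ pre a y x.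

Definition lowerset (a : I) (x : L) : L -> Prop :=
  fun y => forall b, lt b a -> eqa b x y.

Definition cls (a : I) (x : L) : L -> Prop := fun y => eqa a x y.

(* y is the element of (A3) for X relative to (x]_a, i.e. y = \bigsqcup_a X *)
Definition is_bigsqcup (a : I) (x : L) (le : L -> L -> Prop)
  (X : L -> Prop) (y : L) : Prop :=
  lowerset a x y /\ (forall u, X u -> pre a u y) /\
  (forall z, lowerset a x z -> (forall u, X u -> pre a u z) ->
     pre a y z /\ le y z).
End Derived.

Definition model {I L : Type} (lt : I -> I -> Prop) (le : L -> L -> Prop)
  (sup : (L -> Prop) -> L) (pre : I -> L -> L -> Prop) : Prop :=
  well_order lt /\ inhabited I /\ complete_lattice le sup /\
  (forall a, preorder (pre a)) /\
  (forall a b x y, lt a b -> pre b x y -> eqa pre a x y) /\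
  (forall x y, (forall a, eqa pre a x y) -> x = y) /\
  (forall x a (X : L -> Prop), (forall u, X u -> lowerset lt pre a x u) ->
     exists y, is_bigsqcup lt pre a x le X y) /\
  (forall (X : L -> Prop) a y, (exists u, X u) ->
     (forall u, X u -> eqa pre a y u) -> eqa pre a y (sup X)).

(* Main.v *)
Require Import Defs.

Theorem mainTheorem5 (I L : Type) (lt : I -> I -> Prop) (le : L -> L -> Prop)
  (sup : (L -> Prop) -> L) (pre : I -> L -> L -> Prop)
  (Hmodel : model lt le sup pre) (Hlim : limit_type lt)
  (a : I) (x : L) (X : L -> Prop)
  (HX : forall u, X u -> lowerset lt pre a x u)
  (y : L) (Hy : is_bigsqcup lt pre a x le X y) :
  (cls pre a y y /\ forall z, cls pre a y z -> le y z) /\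
  (forall s, is_succ lt a s -> forall z, cls pre a y z -> pre s y z).
Proof.
  destruct Hmodel as [[Hirr [Htr [Htri Hwf]]] [_ [[Hlr [Hlt [Hla _]]] [Hpre [A1 [A2 [A3 A4]]]]]]].
  destruct Hy as [Hyl [HyX Hymin]].
  assert (Hrefl : forall b w, pre b w w) by (intros b w; apply (Hpre b)).
  assert (Htrans : forall b u v w, pre b u v -> pre b v w -> pre b u w)
    by (intros b u v w; apply (Hpre b)).
  assert (P1 : forall z, cls pre a y z -> le y z).
  { intros z [Hyz Hzy].
    assert (Hz : lowerset lt pre a x z).
    { intros b hb. destruct (Hyl b hb) as [h1 h2].
      destruct (A1 b a y z hb Hyz) as [h3 h4].
      split; eauto. }
    assert (HXz : forall u, X u -> pre a u z) by (intros u hu; eauto).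
    exact (proj2 (Hymin z Hz HXz)). }
  split. { split; [split; apply Hrefl | exact P1]. }
  intros s [Has Hs] z Hz.
  assert (Hlow : forall w, cls pre a y w -> lowerset lt pre s y w).
  { intros w Hw b hb.
    destruct (Htri b a) as [h | [h | h]].
    - destruct Hw as [Hw1 Hw2]. exact (A1 b a y w h Hw1).
    - subst; exact Hw.
    - exfalso; exact (Hs b h hb). }
  destruct (A3 y s (fun _ => False) (fun u hu => False_ind _ hu)) as [m [Hml [_ Hmmin]]].
  assert (Hym : cls pre a y m) by exact (Hml a Has).
  assert (Hmy : le m y).
  { apply (proj2 (Hmmin y (Hlow y (conj (Hrefl a y) (Hrefl a y))) (fun u hu => False_ind _ hu))). }
  assert (m = y) by (apply Hla; [exact Hmy | exact (P1 m Hym)]).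
  subst m.
  exact (proj1 (Hmmin z (Hlow z Hz) (fun u hu => False_ind _ hu))).
Qed.
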